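(* Let $n \ge 1$, $1 \le k \le 2^n$ and $0 \le q \le n$. Let $S^*_{k,n} = \{\mathrm{bin}(0),\mathrm{bin}(1),\ldots,\mathrm{bin}(k-1)\} \subseteq B_n$. Then $m_q(S^*_{k,n}) = \sum_{j=0}^{k-1} h_q(j)$, and for every set $S \subseteq B_n$ with $|S| = k$ we have $m_q(S) \le m_q(S^*_{k,n})$. That is, $S^*_{k,n}$ contains the maximum possible number of $q$-dimensional subcubes among all $k$-element subsets of $B_n$.
   Context: The $n$-cube is $B_n = \{0,1\}^n$; the coordinates of $x \in B_n$ are indexed $x = (x_{n-1},\ldots,x_1,x_0)$, and $x$ represents the integer $\sum_{i=0}^{n-1} x_i 2^i$. For $i \in [0:2^n-1]$, $\mathrm{bin}(i) \in B_n$ is the $n$-bit binary representation of $i$ (with leading zeros). $h(i)$ denotes the number of ones in $\mathrm{bin}(i)$, and $h_q(i) = \binom{h(i)}{q}$. A $q$-dimensional subcube of $B_n$ is a set of the form $\{x \in B_n : x_i = b(i) \text{ for all } i \in Q\}$, where $Q \subseteq [0:n-1]$ has size $n-q$ and $b : Q \to \{0,1\}$ is arbitrary. For $S \subseteq B_n$, $m_q(S)$ denotes the number of $q$-dimensional subcubes of $B_n$ contained in $S$. *)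

(* Defs.v *)
From mathcomp Require Import all_boot.
Set Implicit Arguments. Unset Strict Implicit. Unset Printing Implicit Defensive.

Definition cube (n : nat) : finType := {ffun 'I_n -> bool}.

Definition bin (n i : nat) : cube n := [ffun j : 'I_n => odd (i %/ 2 ^ j)].

Definition hw (n i : nat) : nat := #|[set j : 'I_n | bin n i j]|.

Definition hq (n q i : nat) : nat := 'C(hw n i, q).

Definition is_subcube (n q : nat) (C : {set cube n}) : bool :=
  [exists Q : {set 'I_n}, exists b : {ffun 'I_n -> bool},
     (#|Q| == n - q) && (C == [set x : cube n | [forall i in Q, x i == b i]])].

Definition mq (n q : nat) (S : {set cube n}) : nat :=
  #|[set C : {set cube n} | is_subcube q C && (C \subset S)]|.

Definition Sstar (n k : nat) : {set cube n} := [set bin n (val j) | j : 'I_k].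

(* Main.v *)
Require Import Defs.
From mathcomp Require Import all_boot zify.

Definition pcn (n j : nat) := \sum_(i < n) odd (j %/ 2 ^ i).
Definition pc j := pcn j j.
Definition cc (h q : nat) := if q is q'.+1 then 'C(h, q') else 0.
Definition F (q k : nat) := \sum_(j < k) cc (pc j) q.

Lemma ccS h q : cc h.+1 q = cc h q + cc h q.-1.
Proof. by case: q => [|[|q]] //=; rewrite ?bin0 ?binS. Qed.

Lemma pcnS n j : pcn n.+1 j = odd j + pcn n j./2.
Proof.
rewrite /pcn big_ord_recl expn0 divn1; congr (_ + _).
apply: eq_bigr => i _; by rewrite /bump /= expnS divnMA divn2.
Qed.

Lemma pcn_stable n m j : j < 2 ^ n -> pcn (n + m) j = pcn n j.
Proof.
move=> hj; elim: m => [|m IH]; first by rewrite addn0.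
rewrite addnS /pcn big_ord_recr /= -/(pcn _ _) IH divn_small ?addn0 //.
apply: leq_trans hj _; rewrite leq_exp2l //; lia.
Qed.

Lemma pc_pcn n j : j < 2 ^ n -> pc j = pcn n j.
Proof.
move=> hj; rewrite /pc.
have hj' : j < 2 ^ j by apply: ltn_expl.
case: (leqP n j) => h.
- by rewrite -{1}(subnKC h) pcn_stable.
- by rewrite -(subnKC (ltnW h)) pcn_stable.
Qed.

Lemma pc_even i : pc (i + i) = pc i.
Proof.
have hi : i < 2 ^ i by apply: ltn_expl.
rewrite (@pc_pcn i.+1); last by rewrite expnS; lia.
rewrite pcnS addnn odd_double /= doubleK (pc_pcn _ _ hi) //.
Qed.

Lemma pc_odd i : pc (i + i).+1 = (pc i).+1.
Proof.
have hi : i < 2 ^ i by apply: ltn_expl.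
rewrite (@pc_pcn i.+1); last by rewrite expnS; lia.
rewrite pcnS addnn /= odd_double /= uphalf_double (pc_pcn _ _ hi) //.
Qed.

Lemma F0 q : F q 0 = 0. Proof. by rewrite /F big_ord0. Qed.
Lemma FS q k : F q k.+1 = F q k + cc (pc k) q.
Proof. by rewrite /F big_ord_recr. Qed.
Lemma F_zero k : F 0 k = 0.
Proof. by rewrite /F big1. Qed.

Lemma F_mono q m n : m <= n -> F q m <= F q n.
Proof.
move=> h; rewrite -(subnKC h); elim: (n - m) => [|d IH]; first by rewrite addn0.
rewrite addnS FS; lia.
Qed.

Lemma F_even q m : F q (m + m) = F q m + F q m + F q.-1 m.
Proof.
elim: m => [|m IH]; first by rewrite !F0.
rewrite addnS addSn !FS IH pc_odd pc_even ccS; lia.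
Qed.

Lemma F_odd q m : F q (m + m).+1 = F q m.+1 + F q m + F q.-1 m.
Proof. rewrite FS F_even FS pc_even; lia. Qed.

Lemma halfcase a : exists x, a = x + x \/ a = (x + x).+1.
Proof.
exists a./2; move: (odd_double_half a); rewrite -addnn.
case: (odd a) => /= <-; [right|left]; lia.
Qed.

Lemma F_main s : forall q a b, b <= a -> a + b <= s ->
  F q a + F q b + F q.-1 b <= F q (a + b).
Proof.
elim: s => [|s IH] q a b hba hs.
  have -> : a = 0 by lia. have -> : b = 0 by lia. by rewrite !F0.
case: (posnP b) => [->|bpos]; first by rewrite !F0 !addn0.
have IH' : forall q a b, b <= a -> a + b <= s -> F q a + F q b + F q.-1 b <= F q (a + b).
  by move=> *; apply: IH.
have [x [ea|ea]] := halfcase a; have [y [eb|eb]] := halfcase b; subst a b.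
-
  have h1 := IH' q x y ltac:(lia) ltac:(lia).
  have h2 := IH' q.-1 x y ltac:(lia) ltac:(lia).
  have -> : x + x + (y + y) = (x + y) + (x + y) by lia.
  rewrite !F_even; lia.
-
  have h1 := IH' q x y.+1 ltac:(lia) ltac:(lia).
  have h2 := IH' q x y ltac:(lia) ltac:(lia).
  have h3 := IH' q.-1 x y ltac:(lia) ltac:(lia).
  have -> : x + x + (y + y).+1 = ((x + y) + (x + y)).+1 by lia.
  rewrite !F_even !F_odd. rewrite addnS in h1. lia.
-
  have h1 := IH' q x.+1 y ltac:(lia) ltac:(lia).
  have h2 := IH' q x y ltac:(lia) ltac:(lia).
  have h3 := IH' q.-1 x y ltac:(lia) ltac:(lia).
  have -> : (x + x).+1 + (y + y) = ((x + y) + (x + y)).+1 by lia.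
  rewrite !F_even !F_odd. rewrite addSn in h1. lia.
-
  have -> : (x + x).+1 + (y + y).+1 = (x + y).+1 + (x + y).+1 by lia.
  rewrite !F_odd F_even.
  case: (ltngtP y x) => hxy; last 1 first.
  + subst y.
    have h1 := IH' q x.+1 x ltac:(lia) ltac:(lia).
    have h3 := IH' q.-1 x x ltac:(lia) ltac:(lia).
    rewrite addSn in h1.
    rewrite [F q.-1 (x + x).+1]FS pc_even [F q.-1 x.+1]FS. lia.
  + have h1 := IH' q x.+1 y ltac:(lia) ltac:(lia).
    have h2 := IH' q x y.+1 ltac:(lia) ltac:(lia).
    have h3 := IH' q.-1 x y ltac:(lia) ltac:(lia).
    have h4 := F_mono q.-1 (x + y) (x + y).+1 (leqnSn _).
    rewrite addSn in h1. rewrite addnS in h2. lia.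
  + lia.
Qed.

Section Cube.
Variable n : nat.
Implicit Types (x y : cube n) (D : {set 'I_n}) (S : {set cube n}) (i j : 'I_n) (q : nat).

Definition cub (x : cube n) (D : {set 'I_n}) : {set cube n} :=
  [set y : cube n | [forall j, (j \notin D) ==> (y j == x j)]].
Definition supp (x : cube n) : {set 'I_n} := [set j | x j].
Definition PP q (S : {set cube n}) : {set cube n * {set 'I_n}} :=
  [set p : cube n * {set 'I_n} | [&& #|p.2| == q, p.2 \subset supp p.1 & cub p.1 p.2 \subset S]].
Definition upd (x : cube n) i b : cube n := [ffun j => if j == i then b else x j].
Definition flip i (x : cube n) : cube n := [ffun j => if j == i then ~~ x j else x j].

Lemma in_cub y x D : (y \in cub x D) = [forall j, (j \notin D) ==> (y j == x j)].
Proof. by rewrite inE. Qed.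

Lemma cub_self x D : x \in cub x D.
Proof. by rewrite in_cub; apply/forallP => j; apply/implyP. Qed.

Lemma flip_cub x D i : i \in D -> flip i x \in cub x D.
Proof.
move=> iD; rewrite in_cub; apply/forallP => j; apply/implyP => jD.
rewrite ffunE; case: (j =P i) => [e|//]; by rewrite e iD in jD.
Qed.

Lemma cubP y x D : reflect (forall j, j \notin D -> y j = x j) (y \in cub x D).
Proof.
rewrite in_cub; apply: (iffP forallP) => h j.
- by move=> jD; move: (h j); rewrite jD => /eqP.
- by apply/implyP => /h ->.
Qed.

Lemma flipK i : involutive (flip i).
Proof. by move=> x; apply/ffunP => j; rewrite !ffunE; case: eqP => // _; rewrite negbK. Qed.

Lemma flip_inj i : injective (flip i).
Proof. exact: inv_inj (flipK i). Qed.

Lemma cub_inj x D x' D' : D \subset supp x -> D' \subset supp x' ->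
  cub x D = cub x' D' -> x = x' /\ D = D'.
Proof.
move=> Dx D'x' e.
have sub : forall x D x' D', cub x D = cub x' D' -> D \subset D'.
  move=> x1 D1 x2 D2 e1; apply/subsetP => i iD.
  apply/negPn/negP => iD'.
  have h1 : flip i x1 \in cub x2 D2 by rewrite -e1 flip_cub.
  have h2 : x1 \in cub x2 D2 by rewrite -e1 cub_self.
  move/cubP: h1 => /(_ i iD'); move/cubP: h2 => /(_ i iD').
  by rewrite ffunE eqxx => ->; case: (x2 i).
have eD : D = D' by apply/eqP; rewrite eqEsubset (sub _ _ _ _ e) (sub _ _ _ _ (esym e)).
split => //; subst D'.
apply/ffunP => j; case: (boolP (j \in D)) => jD.
- move/subsetP: Dx => /(_ j jD); move/subsetP: D'x' => /(_ j jD).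
  by rewrite !inE => -> ->.
- have : x \in cub x' D by rewrite -e cub_self.
  by move/cubP => /(_ j jD).
Qed.

Lemma mq_PP q S : q <= n -> mq q S = #|PP q S|.
Proof.
move=> qn; rewrite /mq.
have -> : [set C | is_subcube q C && (C \subset S)] =
          [set cub p.1 p.2 | p in PP q S].
  apply/setP => C; rewrite inE; apply/andP/imsetP.
  - case=> /existsP [Q /existsP [b /andP [/eqP cQ /eqP eC]]] CS.
    have hc : #|~: Q| = q.
      have := cardsC Q; rewrite card_ord cQ addnC => /(canRL (addnK _)) ->.
      by rewrite subKn.
    have ec : cub [ffun i => (i \in ~: Q) || b i] (~: Q) = C.
      rewrite eC; apply/setP => y; rewrite !inE.
      apply/forallP/forallP => h i; move: (h i); rewrite !inE ?ffunE !inE;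
        by case: (i \in Q).
    exists ([ffun i => (i \in ~: Q) || b i], ~: Q); last by rewrite /= ec.
    rewrite inE /= hc ec CS eqxx andbT /=.
    by apply/subsetP => i iQ; rewrite inE ffunE iQ.
  - case=> [[x D]]; rewrite inE /= => /and3P [/eqP cD Dx cS] ->; split => //.
    apply/existsP; exists (~: D); apply/existsP; exists x.
    apply/andP; split.
    + have := cardsC D; rewrite card_ord cD addnC => /(canRL (addnK _)) ->.
      by [].
    + apply/eqP/setP => y; rewrite !inE.
      apply/forallP/forallP => h i; move: (h i); rewrite !inE; by [].
apply: card_in_imset => [[x D]] [x' D']; rewrite !inE /= => /and3P [_ h1 _] /and3P [_ h2 _] e.
by case: (cub_inj _ _ _ _ h1 h2 e) => -> ->.
Qed.


Lemma F1 k : F 1 k = k.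
Proof.
rewrite /F; under eq_bigr do rewrite /= bin0.
by rewrite sum_nat_const card_ord muln1.
Qed.

Lemma F_sym q a b : F q.+1 a + F q.+1 b + F q (minn a b) <= F q.+1 (a + b).
Proof.
case: (leqP b a) => h.
- have := F_main (a + b) q.+1 a b h (leqnn _); by [].
  move: (F_main (a + b) q.+1 b a (ltnW h) ltac:(lia)) => /= H.  rewrite [a + b]addnC; lia.
Qed.

Lemma nosplit S q : (forall i x y, x \in S -> y \in S -> x i = y i) ->
  #|PP q S| <= F q.+1 #|S|.
Proof.
move=> hns.
have h0 : forall p, p \in PP q S -> p.2 = set0 /\ p.1 \in S.
  move=> [x D]; rewrite inE /= => /and3P [_ Dx cS].
  have xS : x \in S := subsetP cS _ (cub_self x D).
  split => //; apply/setP => i; rewrite inE; apply/negbTE/negP => iD.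
  have fS : flip i x \in S := subsetP cS _ (flip_cub x D i iD).
  by have := hns i _ _ fS xS; rewrite ffunE eqxx; case: (x i).
case: q h0 => [|q] h0.
- rewrite F1; apply: leq_trans (leq_imset_card (fun x : cube n => (x, set0 : {set 'I_n})) S).
  apply: subset_leq_card; apply/subsetP => p pP; have [e xS] := h0 p pP.
  by apply/imsetP; exists p.1 => //; case: p {pP xS} e => ? ? /= ->.
- have : PP q.+1 S \subset set0.
    apply/subsetP => p pP; have [e _] := h0 p pP; move: pP.
    by rewrite inE e cards0.
  by move/subset_leq_card; rewrite cards0 leqn0 => /eqP ->.
Qed.

Lemma main_bound m : forall S, #|S| <= m -> forall q, #|PP q S| <= F q.+1 #|S|.
Proof.
elim: m => [|m IH] S hS q.
  apply: nosplit => i x y xS; move: hS; rewrite leqn0 => /eqP/cards0_eq e.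
  by rewrite e inE in xS.
case: (boolP [exists i, exists x, exists y, [&& x \in S, y \in S & x i != y i]]); last first.
  move=> hn; apply: nosplit => i x y xS yS; apply/eqP/negPn/negP => ne.
  move/negP: hn; apply; apply/existsP; exists i; apply/existsP; exists x;
    apply/existsP; exists y; by rewrite xS yS ne.
move=> /existsP [i /existsP [x /existsP [y /and3P [xS yS xy]]]].
pose B := [set z : cube n | z i].
pose S1 := S :&: B. pose S0 := S :\: B.
have hsum : #|S1| + #|S0| = #|S| by apply: cardsID.
have ne01 : 0 < #|S1| /\ 0 < #|S0|.
  have yi : y i = ~~ x i by move: xy; case: (x i); case: (y i).
  case: (boolP (x i)) => xi.
  - split; apply/card_gt0P; [exists x|exists y]; by rewrite !inE ?xS ?yS ?xi ?yi ?xi.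
  - split; apply/card_gt0P; [exists y|exists x]; by rewrite !inE ?xS ?yS ?yi ?(negbTE xi).
case: ne01 => ne1 ne0.
pose T := S0 :&: (flip i @^-1: S1).
have hT0 : #|T| <= #|S0| by apply: subset_leq_card; apply: subsetIl.
have hT1 : #|T| <= #|S1|.
  rewrite -(card_preimset S1 (flip_inj i)); apply: subset_leq_card; apply: subsetIr.
pose X0 := [set p in PP q S | (i \notin p.2) && ~~ p.1 i].
pose X1 := [set p in PP q S | (i \notin p.2) && p.1 i].
pose X2 := [set p in PP q S | i \in p.2].
have cov : #|PP q S| <= #|X0| + #|X1| + #|X2|.
  have : PP q S \subset X0 :|: X1 :|: X2.
    apply/subsetP => p pP; move: (pP); rewrite inE => pP'; rewrite !inE pP' /=.
    by case: (i \in p.2); case: (p.1 i).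
  move/subset_leq_card => h; apply: leq_trans h _.
  have := cardsUI (X0 :|: X1) X2; have := cardsUI X0 X1; lia.
have b0 : #|X0| <= F q.+1 #|S0|.
  apply: leq_trans (IH S0 ltac:(lia) q); apply: subset_leq_card.
  apply/subsetP => -[z D]; rewrite !inE /= => /andP [/and3P [-> -> cS] /andP [iD zi]] /=.
  apply/subsetP => w wc; rewrite !inE (subsetP cS _ wc) andbT.
  by move/cubP: wc => /(_ i iD) ->.
have b1 : #|X1| <= F q.+1 #|S1|.
  apply: leq_trans (IH S1 ltac:(lia) q); apply: subset_leq_card.
  apply/subsetP => -[z D]; rewrite !inE /= => /andP [/and3P [-> -> cS] /andP [iD zi]] /=.
  apply/subsetP => w wc; rewrite !inE (subsetP cS _ wc) /=.
  by move/cubP: wc => /(_ i iD) ->.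
have b2 : #|X2| <= F q #|T|.
  case Eq: q => [|q'].
  - have : X2 \subset set0.
      apply/subsetP => -[z D]; rewrite !inE /= Eq => /andP [/and3P [/eqP c _ _]].
      by rewrite (cards0_eq c) inE.
    by move/subset_leq_card => h; apply: leq_trans h _; rewrite cards0.
  - pose g (p : cube n * {set 'I_n}) := (upd p.1 i false, p.2 :\ i).
    have ginj : {in X2 &, injective g}.
      move=> [z D] [z' D']; rewrite !inE /= => /andP [/and3P [_ Dz _] iD]
        /andP [/and3P [_ Dz' _] iD'] [e1 e2].
      have eD : D = D' by rewrite -(setD1K iD) -(setD1K iD') e2.
      subst D'; congr (_, _); apply/ffunP => j.
      case: (j =P i) => [->|/eqP ji].
      + by move/subsetP: Dz => /(_ i iD); move/subsetP: Dz' => /(_ i iD); rewrite !inE => -> ->.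
      + by move/ffunP: e1 => /(_ j); rewrite !ffunE (negbTE ji).
    rewrite -(card_in_imset ginj).
    apply: leq_trans (IH T ltac:(lia) q'); apply: subset_leq_card.
    apply/subsetP => p /imsetP [[z D]]; rewrite !inE /= => /andP [/and3P [/eqP cD Dz cS] iD] ->.
    rewrite /g /=; apply/and3P; split.
    + move: cD; rewrite Eq (cardsD1 i D) iD add1n => -[cD]; by rewrite /= cD.
    + apply/subsetP => j; rewrite !inE ffunE => /andP [ji jD].
      by rewrite (negbTE ji); move/subsetP: Dz => /(_ j jD); rewrite inE.
    + apply/subsetP => w /cubP wc.
      have wi : w i = false by rewrite wc ?ffunE ?eqxx // !inE eqxx.
      have wD : forall j, j \notin D -> w j = z j.
        move=> j jD; have ji : j != i by apply: contraNneq jD => ->.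
        by rewrite wc ?ffunE ?(negbTE ji) // !inE negb_and jD orbT.
      have wS : w \in S by apply: (subsetP cS); apply/cubP.
      have fS : flip i w \in S.
        apply: (subsetP cS); apply/cubP => j jD; rewrite ffunE.
        have ji : j != i by apply: contraNneq jD => ->.
        by rewrite (negbTE ji) wD.
      by rewrite !inE wS wi fS ffunE eqxx wi.
apply: leq_trans cov _.
have hm : F q #|T| <= F q (minn #|S0| #|S1|) by apply: F_mono; rewrite leq_min hT0 hT1.
have := F_sym q #|S0| #|S1|; rewrite [#|S0| + _]addnC hsum => h; lia.
Qed.

End Cube.
Arguments cub {n}. Arguments supp {n}. Arguments PP {n}. Arguments upd {n}. Arguments flip {n}.
Arguments cubP {n y x D}. Arguments cub_self {n}.

Lemma numbin n j : \sum_(i < n) odd (j %/ 2 ^ i) * 2 ^ i = j %% 2 ^ n.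
Proof.
elim: n => [|n IH]; first by rewrite big_ord0 expn0 modn1.
rewrite big_ord_recr /= IH.
set r := j %% 2 ^ n.+1.
have e1 : j %% 2 ^ n = r %% 2 ^ n.
  by rewrite /r modn_dvdm // expnS dvdn_mull.
have e2 : odd (j %/ 2 ^ n) = r %/ 2 ^ n :> nat.
  by rewrite -modn2 modn_divl -expnS.
rewrite e1 e2 addnC -divn_eq //.
Qed.

Definition num n (y : cube n) := \sum_(i < n) y i * 2 ^ i.
Arguments num {n} y.

Lemma num_bin n j : j < 2 ^ n -> num (bin n j) = j.
Proof.
move=> hj; rewrite /num; under eq_bigr do rewrite ffunE.
by rewrite numbin modn_small.
Qed.

Lemma bin_surj n (y : cube n) : y = bin n (num y).
Proof.
have hinj : injective (fun j : 'I_(2 ^ n) => bin n (val j)).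
  move=> j j' e; apply: val_inj; move: (congr1 (@num n) e).
  by rewrite !num_bin ?ltn_ord.
have : [set bin n (val j) | j : 'I_(2 ^ n)] == [set: cube n].
  rewrite eqEcard subsetT (card_imset _ hinj) cardsT /cube card_ffun card_bool !card_ord.
  by rewrite leqnn.
move/eqP => e; have : y \in [set: cube n] by rewrite inE.
  move=> _; have : y \in [set bin n (val j) | j : 'I_(2 ^ n)] by rewrite e inE.
  by move=> /imsetP [j _ ->]; rewrite num_bin ?ltn_ord.
Qed.

Lemma Sstar_num n k (y : cube n) : k <= 2 ^ n -> (y \in Sstar n k) = (num y < k).
Proof.
move=> hk; apply/imsetP/idP.
- move=> [j _ ->]; rewrite num_bin ?ltn_ord //; exact: leq_trans (ltn_ord j) hk.
- move=> h; exists (Ordinal h) => //; exact: bin_surj.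
Qed.

Lemma num_le n (x y : cube n) (D : {set 'I_n}) : D \subset supp x -> y \in cub x D -> num y <= num x.
Proof.
move=> Dx /cubP yc; rewrite /num; apply: leq_sum => i _.
rewrite leq_mul2r; apply/orP; right.
case: (boolP (i \in D)) => iD.
- by move/subsetP: Dx => /(_ i iD); rewrite inE => ->; case: (y i).
- by rewrite yc.
Qed.

Lemma card_sum (T : finType) (b : T -> bool) : #|[set i | b i]| = \sum_i (b i : nat).
Proof.
rewrite -sum1_card big_mkcond /=; apply: eq_bigr => i _; rewrite inE; by case: (b i).
Qed.

Lemma hw_pc n j : j < 2 ^ n -> hw n j = pc j.
Proof.
move=> hj; rewrite /hw card_sum (pc_pcn _ _ hj) /pcn.
by apply: eq_bigr => i _; rewrite ffunE.
Qed.

Lemma count_Sstar n k q : k <= 2 ^ n ->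
  #|PP q (Sstar n k)| = \sum_(j < k) hq n q j.
Proof.
move=> hk.
have eP : PP q (Sstar n k) =
   [set p : cube n * {set 'I_n} | [&& #|p.2| == q, p.2 \subset supp p.1 & p.1 \in Sstar n k]].
  apply/setP => -[x D]; rewrite !inE /=.
  case: (#|D| == q) => //=; case: (boolP (D \subset supp x)) => //= Dx.
  apply/idP/idP.
  - by move/subsetP => /(_ x (cub_self x D)).
  - move=> xS; apply/subsetP => y yc; rewrite Sstar_num //.
    rewrite Sstar_num // in xS; apply: leq_ltn_trans xS.
    exact: num_le Dx yc.
rewrite eP -sum1_card big_mkcond /=.
set A := [set p : cube n * {set 'I_n} | _].
have -> : \sum_(p : cube n * {set 'I_n}) (if p \in A then 1 else 0) =
   \sum_(x : cube n) \sum_(D : {set 'I_n}) (if (x, D) \in A then 1 else 0).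
  by rewrite pair_bigA; apply: eq_bigr => -[].
rewrite /= (eq_bigr (fun x => if x \in Sstar n k then 'C(#|supp x|, q) else 0)); last first.
  move=> x _; case: (boolP (x \in Sstar n k)) => xS.
  - rewrite -cards_draws -sum1_card [in RHS]big_mkcond /=; apply: eq_bigr => D _.
    by rewrite /A !inE /= xS andbT andbC.
  - by rewrite big1 // => D _; rewrite /A inE /= (negbTE xS) !andbF.
rewrite -big_mkcond /= /Sstar big_imset /=; last first.
  move=> j j' _ _ e; apply: val_inj; move: (congr1 (@num n) e).
  rewrite !num_bin //; [exact: leq_trans (ltn_ord j') hk | exact: leq_trans (ltn_ord j) hk].
by [].
Qed.

Theorem theorem1 (n k q : nat) :
  1 <= n -> 1 <= k <= 2 ^ n -> q <= n ->
  mq q (Sstar n k) = \sum_(j < k) hq n q j /\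
  (forall S : {set cube n}, #|S| = k -> mq q S <= mq q (Sstar n k)).
Proof.
move=> _ /andP [_ hk] qn.
have e : mq q (Sstar n k) = \sum_(j < k) hq n q j by rewrite mq_PP // count_Sstar.
split => // S hS.
rewrite e mq_PP //.
have := main_bound n #|S| S (leqnn _) q; rewrite hS => h; apply: leq_trans h _.
rewrite /F; apply: eq_leq; apply: eq_bigr => j _ /=.
by rewrite /hq hw_pc //; apply: leq_trans (ltn_ord j) hk.
Qed.
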